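(* Let $c>1$ be an irrational number, let $d=\{c\}^{-1}$, let $c'_n=[c^{-1}n]$, and define $$f(n)=[c^{-1}(n+1)]-[c^{-1}n],\qquad g(n)=[\{c\}(n+1)]-[\{c\}n].$$ Let $k$ be a nonnegative integer, and for a positive integer $m$ let $x=[mc]$. Then, as $m\to\infty$, \begin{align*} \sum_{n=1}^x \frac{f(n)g([\frac{n}{c}]+k+1)}{n} =\;& \frac{\{c\}}{c}+(cd)^{-1}(\log m + \log c + \gamma)+\{d^{-1}(1+k)\}\\ &- \sum_{n=1}^\infty \frac{d^{-1}\{c^{-1}(n+1)\}+\{d^{-1}(c'_{n+1}+k+1)\}}{n(n+1)} + O\left(\frac{1}{m}\right), \end{align*} where $\gamma$ is Euler's constant.
   Context: $[x]$ is the greatest integer not exceeding $x$ and $\{x\}=x-[x]$. The function $f$ is the indicator of $\{[cj]:j\ge1\}$ and $g$ is the indicator of $\{[dj]:j\ge1\}$. The implied constant may depend on $c$ and $k$. *)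

(* Defs.v *)
From Stdlib Require Import Reals Lra Lia ZArith.
From Coquelicot Require Import Coquelicot.
Open Scope R_scope.

(* [x] : greatest integer not exceeding x (Int_part x = up x - 1 is the floor). *)
Definition flr (x : R) : R := IZR (Int_part x).
Definition frc (x : R) : R := x - flr x.

Definition irrational (x : R) : Prop :=
  forall p q : Z, q <> 0%Z -> x <> IZR p / IZR q.

Definition euler_gamma : R :=
  real (Lim_seq (fun n : nat => sum_n_m (fun i : nat => / INR i) 1 n - ln (INR n))).

Definition fseq (c n : R) : R := flr (/ c * (n + 1)) - flr (/ c * n).
Definition gseq (c n : R) : R := flr (frc c * (n + 1)) - flr (frc c * n).

(* Main.v *)
Require Import Defs.
From Stdlib Require Import Reals ZArith Lra Lia.
From Coquelicot Require Import Coquelicot.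
Open Scope R_scope.

Ltac toR := match goal with |- ?a = ?b => change (@eq R a b) end.

Ltac fixR := repeat change (@plus R_AbelianMonoid ?a ?b) with (Rplus a b); try change (@zero R_AbelianMonoid) with 0; try toR.

Lemma plus_R (a b : R) : plus a b = a + b. Proof. reflexivity. Qed.
Lemma plus_RM (a b : R) : @plus R_AbelianMonoid a b = a + b. Proof. reflexivity. Qed.
Lemma zero_R : (zero : R) = 0. Proof. reflexivity. Qed.

Lemma ln_le_sub1 y : 0 < y -> ln y <= y - 1.
Proof. intro Hy. pose proof (exp_ineq1_le (ln y)) as H. rewrite exp_ln in H; lra. Qed.

Lemma flr_spec y : flr y <= y /\ y - 1 < flr y.
Proof. unfold flr. destruct (base_Int_part y). lra. Qed.

Lemma frc_bounds y : 0 <= frc y < 1.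
Proof. unfold frc. destruct (flr_spec y). lra. Qed.

Lemma flr_step y e : 0 <= e < 1 -> flr (y + e) - flr y = 0 \/ flr (y + e) - flr y = 1.
Proof.
  intros He. unfold flr.
  destruct (base_Int_part y) as [H1 H2]. destruct (base_Int_part (y+e)) as [H3 H4].
  set (a := Int_part y) in *. set (b := Int_part (y+e)) in *.
  assert (Hlo : (-1 < b - a)%Z). { apply lt_IZR. rewrite minus_IZR. lra. }
  assert (Hhi : (b - a < 2)%Z). { apply lt_IZR. rewrite minus_IZR. lra. }
  assert (b - a = 0 \/ b - a = 1)%Z as [E|E] by lia.
  - left. rewrite <- minus_IZR, E. reflexivity.
  - right. rewrite <- minus_IZR, E. reflexivity.
Qed.

Lemma flr_small y : 0 <= y < 1 -> flr y = 0.
Proof.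
  intros Hy. unfold flr. destruct (base_Int_part y) as [H1 H2].
  set (a := Int_part y) in *.
  assert (Hlo : (-1 < a)%Z). { apply lt_IZR. lra. }
  assert (Hhi : (a < 1)%Z). { apply lt_IZR. lra. }
  assert (a = 0)%Z as -> by lia. reflexivity.
Qed.

Definition H (N : nat) : R := sum_n_m (fun i : nat => / INR i) 1 N.
Lemma H_S N : H (S N) = H N + / INR (S N).
Proof. unfold H. rewrite sum_n_Sm; [reflexivity | lia]. Qed.
Lemma H_0 : H 0 = 0. Proof. unfold H. rewrite sum_n_m_zero; [reflexivity|lia]. Qed.

Definition w (n : nat) : R := H (S n) - ln (INR (S n)).

Lemma ln_gap n : (0 < n)%nat -> / INR (S n) <= ln (INR (S n)) - ln (INR n) <= / INR n.
Proof.
  intros Hn. assert (Hp : 0 < INR n) by (apply lt_0_INR; lia).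
  rewrite S_INR. split.
  - assert (Hq : 0 < INR n / (INR n + 1)) by (apply Rdiv_lt_0_compat; lra).
    pose proof (ln_le_sub1 _ Hq) as L.
    rewrite ln_div in L by lra.
    assert (INR n / (INR n + 1) - 1 = - / (INR n + 1)) by (field; lra).
    lra.
  - assert (Hq : 0 < (INR n + 1) / INR n) by (apply Rdiv_lt_0_compat; lra).
    pose proof (ln_le_sub1 _ Hq) as L.
    rewrite ln_div in L by lra.
    assert ((INR n + 1) / INR n - 1 = / INR n) by (field; lra).
    lra.
Qed.

Lemma w_decr n : w (S n) <= w n.
Proof.
  unfold w. rewrite (H_S (S n)). pose proof (ln_gap (S n) ltac:(lia)). lra.
Qed.

Lemma z_incr n : w n - / INR (S n) <= w (S n) - / INR (S (S n)).
Proof.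
  unfold w. rewrite (H_S (S n)). pose proof (ln_gap (S n) ltac:(lia)). lra.
Qed.

Lemma w_mono n m : (n <= m)%nat -> w m <= w n.
Proof. intros Hnm; induction Hnm; [lra | pose proof (w_decr m); lra]. Qed.

Lemma z_mono n m : (n <= m)%nat -> w n - / INR (S n) <= w m - / INR (S m).
Proof. intros Hnm; induction Hnm; [lra | pose proof (z_incr m); lra]. Qed.

Lemma gamma_bounds n : w n - / INR (S n) <= euler_gamma <= w n.
Proof.
  assert (Hw0 : w 0 - / INR 1 = 0).
  { unfold w. rewrite H_S, H_0. simpl INR. rewrite ln_1. field. }
  assert (Hex : ex_finite_lim_seq w).
  { apply ex_finite_lim_seq_decr with 0. apply w_decr. intro m.
    pose proof (z_mono 0 m ltac:(lia)).
    assert (0 < / INR (S m)) by (apply Rinv_0_lt_compat, lt_0_INR; lia). lra. }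
  destruct Hex as [l Hl].
  assert (Eg : euler_gamma = l).
  { unfold euler_gamma. rewrite <- Lim_seq_incr_1.
    rewrite (Lim_seq_ext _ w) by (intro; reflexivity).
    rewrite (is_lim_seq_unique _ _ Hl). reflexivity. }
  rewrite Eg. split.
  - assert (Hr : Rbar_le (w n - / INR (S n)) l).
    { apply (is_lim_seq_le_loc (fun _ => w n - / INR (S n)) w).
      exists n. intros m Hm. pose proof (z_mono n m Hm).
      assert (0 < / INR (S m)) by (apply Rinv_0_lt_compat, lt_0_INR; lia). lra.
      apply is_lim_seq_const. exact Hl. }
    exact Hr.
  - assert (Hr : Rbar_le l (w n)).
    { apply (is_lim_seq_le_loc w (fun _ => w n)).
      exists n. intros m Hm. apply (w_mono n m Hm).
      exact Hl. apply is_lim_seq_const. }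
    exact Hr.
Qed.

Lemma tail_bound (b : nat -> R) (K : R) (N : nat) : (0 < N)%nat -> 0 <= K ->
  (forall k, 0 <= b k <= K * (/ INR (N + k) - / INR (N + k + 1))) ->
  ex_series b /\ 0 <= Series b <= K / INR N.
Proof.
  intros HN HK Hb.
  assert (Hs : forall n, 0 <= sum_n b n <= K * (/ INR N - / INR (N + n + 1))).
  { induction n.
    - rewrite sum_O. specialize (Hb 0%nat). replace (N + 0)%nat with N in * by lia. exact Hb.
    - rewrite sum_Sn, plus_R. specialize (Hb (S n)).
      replace (N + S n + 1)%nat with (N + n + 1 + 1)%nat in * by lia.
      replace (N + S n)%nat with (N + n + 1)%nat in * by lia. lra. }
  assert (Hpos : forall n, 0 <= K * / INR (N + n + 1)).
  { intro n. apply Rmult_le_pos; [lra|]. apply Rlt_le, Rinv_0_lt_compat, lt_0_INR; lia. }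
  assert (Hex : ex_finite_lim_seq (sum_n b)).
  { apply ex_finite_lim_seq_incr with (K / INR N).
    - intro n. rewrite sum_Sn, plus_R. specialize (Hb (S n)). lra.
    - intro n. specialize (Hs n). specialize (Hpos n). unfold Rdiv. lra. }
  destruct Hex as [l Hl].
  assert (Hser : is_series b l) by exact Hl.
  split. exists l; exact Hser.
  rewrite (is_series_unique _ _ Hser).
  split.
  - assert (Hr : Rbar_le 0 l).
    { apply (is_lim_seq_le_loc (fun _ => 0) (sum_n b)).
      exists 0%nat; intros; apply Hs. apply is_lim_seq_const. exact Hl. }
    exact Hr.
  - assert (Hr : Rbar_le l (K / INR N)).
    { apply (is_lim_seq_le_loc (sum_n b) (fun _ => K / INR N)).
      exists 0%nat; intros n _. specialize (Hs n). specialize (Hpos n). unfold Rdiv. lra.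
      exact Hl. apply is_lim_seq_const. }
    exact Hr.
Qed.

Definition cp (c : R) (n : nat) : R := flr (/ c * INR n).
Definition Aseq (c : R) (k n : nat) : R :=
  flr (frc c * (cp c (S n) + INR k + 1)) - flr (frc c * (INR k + 1)).
Definition Bseq (c : R) (k n : nat) : R :=
  frc c * frc (/ c * (INR n + 1)) + frc (frc c * (flr (/ c * (INR n + 1)) + INR k + 1)).
Definition Btm (c : R) (k n : nat) : R := Bseq c k n / (INR n * (INR n + 1)).

Lemma invc_bounds c : 1 < c -> 0 < / c < 1.
Proof.
  intros Hc. assert (H1 : 0 < / c) by (apply Rinv_0_lt_compat; lra).
  assert (H2 : / c * c = 1) by (field; lra). split; [lra| nra].
Qed.

Lemma A0 c k : 1 < c -> Aseq c k 0 = 0.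
Proof.
  intros Hc. unfold Aseq, cp.
  replace (/ c * INR 1) with (/ c) by (simpl; ring).
  rewrite (flr_small (/ c)) by (pose proof (invc_bounds c Hc); lra).
  replace (frc c * (0 + INR k + 1)) with (frc c * (INR k + 1)) by ring. ring.
Qed.

Lemma Astep c k p : 1 < c ->
  fseq c (INR (S p)) * gseq c (flr (INR (S p) / c) + INR k + 1) = Aseq c k (S p) - Aseq c k p.
Proof.
  intros Hc. unfold fseq, gseq, Aseq, cp.
  replace (INR (S (S p))) with (INR (S p) + 1) by (rewrite (S_INR (S p)); reflexivity).
  replace (INR (S p) / c) with (/ c * INR (S p)) by (unfold Rdiv; ring).
  set (y := / c * INR (S p)).
  replace (/ c * (INR (S p) + 1)) with (y + / c) by (unfold y; ring).
  destruct (flr_step y (/ c)) as [E|E].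
  - pose proof (invc_bounds c Hc); lra.
  - assert (Hf : flr (y + / c) = flr y) by lra. rewrite Hf. ring.
  - assert (Hf : flr (y + / c) = flr y + 1) by lra. rewrite Hf.
    replace (flr y + 1 + INR k + 1) with (flr y + INR k + 1 + 1) by ring. ring.
Qed.

Lemma abel (A : nat -> R) (p : nat) : A 0%nat = 0 ->
  sum_n_m (fun n => (A n - A (pred n)) / INR n) 1 (S p) =
  A (S p) / INR (S p) + sum_n_m (fun n => A n / (INR n * (INR n + 1))) 1 p.
Proof.
  intros H0. induction p.
  - rewrite sum_n_n. rewrite sum_n_m_zero by lia. rewrite zero_R. simpl pred. rewrite H0. simpl INR. toR. unfold Rdiv. ring.
  - rewrite sum_n_Sm by lia. rewrite plus_R, IHp.
    rewrite sum_n_Sm by lia. change (@plus R_AbelianMonoid ?a ?b) with (Rplus a b). cbv beta.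
    change (pred (S (S p))) with (S p).
    assert (0 < INR (S p)) by (apply lt_0_INR; lia).
    rewrite (S_INR (S p)). toR. field. lra.
Qed.

Lemma decomp c k n : 1 < c ->
  Aseq c k n = frc c / c * (INR n + 1) + frc (frc c * (1 + INR k)) - Bseq c k n.
Proof.
  intros Hc. unfold Aseq, Bseq, cp. rewrite S_INR.
  rewrite (Rplus_comm 1 (INR k)).
  set (fc := frc c).
  set (F := flr (/ c * (INR n + 1))).
  unfold frc. fold F.
  set (G := flr (fc * (F + INR k + 1))).
  set (L := flr (fc * (INR k + 1))).
  field. lra.
Qed.

Lemma sumA c k N : 1 < c ->
  sum_n_m (fun n => Aseq c k n / (INR n * (INR n + 1))) 1 N =
  frc c / c * H N + frc (frc c * (1 + INR k)) * (1 - / (INR N + 1)) - sum_n_m (Btm c k) 1 N.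
Proof.
  intros Hc. induction N.
  - rewrite !sum_n_m_zero by lia. fixR. rewrite H_0. simpl INR.
    rewrite Rplus_0_l, Rinv_1. ring.
  - rewrite !sum_n_Sm by lia. fixR. rewrite H_S, IHN.
    rewrite (decomp c k (S N)) by exact Hc. unfold Btm. rewrite S_INR.
    assert (0 <= INR N) by apply pos_INR. field. repeat split; lra.
Qed.

Lemma Bseq_bounds c k n : 0 <= Bseq c k n <= 2.
Proof.
  unfold Bseq. pose proof (frc_bounds c). pose proof (frc_bounds (/ c * (INR n + 1))).
  pose proof (frc_bounds (frc c * (flr (/ c * (INR n + 1)) + INR k + 1))).
  nra.
Qed.

Lemma Btm_bounds c k n : (0 < n)%nat -> 0 <= Btm c k n <= 2 * (/ INR n - / INR (S n)).
Proof.
  intros Hn. assert (0 < INR n) by (apply lt_0_INR; lia).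
  rewrite S_INR.
  replace (/ INR n - / (INR n + 1)) with (/ (INR n * (INR n + 1))) by (field; lra).
  unfold Btm, Rdiv. pose proof (Bseq_bounds c k n).
  assert (0 < / (INR n * (INR n + 1))) by (apply Rinv_0_lt_compat; nra).
  nra.
Qed.

Theorem lemma12 (c : R) (k : nat) (Hc1 : 1 < c) (Hirr : irrational c) :
  let d := / frc c in
  let c' := fun n : R => flr (/ c * n) in
  exists C M : R, forall m : nat, (0 < m)%nat -> M <= INR m ->
    let x := Z.to_nat (Int_part (INR m * c)) in
    Rabs (sum_n_m (fun n : nat =>
              fseq c (INR n) * gseq c (flr (INR n / c) + INR k + 1) / INR n) 1 x
          - (frc c / c + / (c * d) * (ln (INR m) + ln c + euler_gamma)
             + frc (/ d * (1 + INR k))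
             - Series (fun j : nat =>
                 let n := INR (j + 1) in
                 (/ d * frc (/ c * (n + 1)) + frc (/ d * (c' (n + 1) + INR k + 1)))
                 / (n * (n + 1)))))
    <= C / INR m.
Proof.
  intros d c'. subst d c'.
  exists 16, 2. intros m Hm0 Hm2 x.
  rewrite Rinv_inv, Rinv_mult, Rinv_inv.
  rewrite (Series_ext _ (fun j => Btm c k (S j))).
  2:{ intro j. cbv zeta. replace (j + 1)%nat with (S j) by lia. unfold Btm, Bseq. reflexivity. }
  assert (Hcpos : 0 < c) by lra.
  assert (Hm : 0 < INR m) by (apply lt_0_INR; lia).
  rewrite <- ln_mult by lra.
  set (mc := INR m * c) in *.
  assert (Hmc : INR m < mc) by (unfold mc; nra).
  destruct (base_Int_part mc) as [Hi1 Hi2].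
  assert (Hz : (0 <= Int_part mc)%Z) by (apply le_IZR; lra).
  assert (HX : INR x = IZR (Int_part mc)).
  { unfold x. rewrite INR_IZR_INZ, Z2Nat.id by exact Hz. reflexivity. }
  clearbody x.
  destruct x as [|p].
  { simpl in HX. lra. }
  rewrite (sum_n_m_ext_loc _ (fun n => (Aseq c k n - Aseq c k (pred n)) / INR n)).
  2:{ intros n [Hn1 Hn2]. destruct n as [|q]; [lia|]. change (pred (S q)) with q.
      rewrite <- Astep by exact Hc1. reflexivity. }
  rewrite abel by (apply A0; exact Hc1).
  rewrite sumA by exact Hc1.
  assert (Hexs : ex_series (fun j => Btm c k (S j))).
  { destruct (tail_bound (fun j => Btm c k (S j)) 2 1) as [E _]; [lia|lra| |exact E].
    intro j. cbv beta. replace (1 + j + 1)%nat with (S (S j)) by lia.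
    replace (1 + j)%nat with (S j) by lia.
    apply Btm_bounds; lia. }
  rewrite (Series_incr_n _ (S p)); [| lia | exact Hexs].
  assert (Hsf : sum_f_R0 (fun j => Btm c k (S j)) (pred (S p)) = sum_n_m (Btm c k) 1 p + Btm c k (S p)).
  { change (pred (S p)) with p. rewrite <- sum_n_Reals. unfold sum_n. rewrite sum_n_m_S.
    rewrite sum_n_Sm by lia. reflexivity. }
  rewrite Hsf. clear Hsf.
  destruct (tail_bound (fun k0 => Btm c k (S (S p + k0))) 2 (S (S p))) as [_ HT]; [lia|lra| |].
  { intro j. cbv beta. replace (S (S p) + j + 1)%nat with (S (S (S p + j))) by lia.
    replace (S (S p) + j)%nat with (S (S p + j)) by lia.
    apply Btm_bounds; lia. }
  set (T := Series (fun k0 => Btm c k (S (S p + k0)))) in *.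
  pose proof (gamma_bounds p) as Hg. unfold w in Hg.
  rewrite (decomp c k (S p)) by exact Hc1.
  pose proof (H_S p) as HHS.
  pose proof (Btm_bounds c k (S p) ltac:(lia)) as HBt.
  pose proof (Bseq_bounds c k (S p)) as HB.
  pose proof (frc_bounds c) as Hfc.
  set (X := INR (S p)) in *.
  assert (HXe : INR p + 1 = X) by (unfold X; rewrite S_INR; ring).
  rewrite HXe.
  assert (HSS : INR (S (S p)) = X + 1) by (unfold X; rewrite (S_INR (S p)); ring).
  rewrite HSS in *.
  assert (HXb : mc - 1 < X <= mc) by (rewrite HX; lra).
  assert (HX1 : 1 < X) by lra.
  assert (Hq1 : ln X <= ln mc) by (apply ln_le; lra).
  assert (Hq2 : ln mc - ln X <= / X).
  { rewrite <- ln_div by lra.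
    assert (Hp : 0 < mc / X) by (apply Rdiv_lt_0_compat; lra).
    pose proof (ln_le_sub1 _ Hp).
    replace (mc / X - 1) with ((mc - X) * / X) in H0 by (field; lra).
    assert (0 < / X) by (apply Rinv_0_lt_compat; lra). nra. }
  set (al := frc c / c).
  assert (Hal : / c * frc c = al) by (unfold al; field; lra).
  rewrite Hal.
  assert (Hal1 : 0 <= al <= 1).
  { pose proof (invc_bounds c Hc1). unfold al, Rdiv. split; nra. }
  set (K0 := frc (frc c * (1 + INR k))).
  set (Bx := Bseq c k (S p)) in *. set (Btx := Btm c k (S p)) in *.
  set (Sp := sum_n_m (Btm c k) 1 p).
  set (g := euler_gamma) in *.
  assert (Hp : H p = H (S p) - / X) by lra.
  rewrite Hp. set (HS := H (S p)) in *.
  match goal with |- Rabs ?e <= _ =>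
    replace e with (al * (HS - ln X - g) - al * (ln mc - ln X) - Bx * / X + Btx + T)
      by (field; lra) end.
  assert (iX : 0 < / X) by (apply Rinv_0_lt_compat; lra).
  assert (Ha : 0 <= al * (HS - ln X - g) <= / X) by nra.
  assert (Hb : 0 <= al * (ln mc - ln X) <= / X) by nra.
  assert (Hc : 0 <= Bx * / X <= 2 * / X) by nra.
  assert (iX1 : 0 < / (X + 1)) by (apply Rinv_0_lt_compat; lra).
  assert (iXX : / (X + 1) <= / X) by (apply Rinv_le_contravar; lra).
  assert (HT2 : T <= 2 * / X) by (unfold Rdiv in HT; lra).
  assert (HXm : / X <= 2 * / INR m).
  { replace (2 * / INR m) with (/ (INR m / 2)) by (field; lra).
    apply Rinv_le_contravar; lra. }
  unfold Rdiv. apply Rabs_le. split; lra.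
Qed.
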